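(* There exists a constant $D>1$ such that testing $\mathsf{Lattice\text{-}Eval}((\{0,1\};\wedge,\vee),D)$ restricted to instances with threshold $\ell=1$ with one-sided error requires a linear number of queries; i.e., there is $\epsilon>0$ such that every one-sided-error $\epsilon$-tester for this problem makes $\Omega(n)$ queries on some instances with $n$ variables.
   Context: For a finite lattice $\mathbb L=(L;\wedge,\vee)$ and a constant $D>1$, $\mathsf{Lattice\text{-}Eval}(\mathbb L,D)$ is the assignment problem whose instances consist of: a circuit $C$ on a variable set $V$ over the basis $\{\wedge,\vee\}$ (gates of fan-in 2) of depth less than $D+D\log_2|V|$; an element $\ell\in L$; and a weight function $w:V\to[0,1]$ with $\sum_x w(x)=1$. Assignments are maps $f:V\to L$, and $f$ is satisfying if $C(f)\ge\ell$ in the lattice order, where $C(f)$ is the value of $C$ under $f$. Distance: $\mathrm{dist}_{\mathcal I}(f)$ is the minimum over satisfying $g$ of $\sum_{x:f(x)\ne g(x)}w(x)$; $f$ is $\epsilon$-far if this exceeds $\epsilon$. A one-sided $\epsilon$-tester gets the instance and $\epsilon$, queries values of $f$, always accepts satisfying $f$ and rejects $\epsilon$-far $f$ with probability $\ge 2/3$. *)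

(* Defs.v *)
From Stdlib Require Import Reals.
From mathcomp Require Import all_boot.

Set Implicit Arguments.
Unset Strict Implicit.
Unset Printing Implicit Defensive.

(* A circuit (DAG) is represented by its unfolding into a formula tree;
   this preserves the computed function and the depth exactly. *)
Inductive circuit (n : nat) : Type :=
| CVar : 'I_n -> circuit n
| CAnd : circuit n -> circuit n -> circuit n
| COr  : circuit n -> circuit n -> circuit n.

Fixpoint ceval (n : nat) (C : circuit n) (f : 'I_n -> bool) : bool :=
  match C with
  | CVar x => f x
  | CAnd C1 C2 => ceval C1 f && ceval C2 f
  | COr C1 C2 => ceval C1 f || ceval C2 f
  end.

Fixpoint cdepth (n : nat) (C : circuit n) : nat :=
  match C with
  | CVar _ => 0
  | CAnd C1 C2 => (maxn (cdepth C1) (cdepth C2)).+1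
  | COr C1 C2 => (maxn (cdepth C1) (cdepth C2)).+1
  end.

Record instance (n : nat) : Type := Instance {
  inst_C : circuit n;
  inst_l : bool;
  inst_w : 'I_n -> R
}.

Definition wsum (n : nat) (w : 'I_n -> R) (P : 'I_n -> bool) : R :=
  \big[Rplus/R0]_(i : 'I_n | P i) w i.

Definition log2 (x : R) : R := Rdiv (ln x) (ln (INR 2)).

Definition valid_instance (D : R) (n : nat) (I : instance n) : Prop :=
  Rlt (INR (cdepth (inst_C I))) (Rplus D (Rmult D (log2 (INR n)))) /\
  (forall x, Rle R0 (inst_w I x) /\ Rle (inst_w I x) R1) /\
  wsum (inst_w I) (fun _ => true) = R1.

(* f is satisfying iff C(f) >= l in the order 0 <= 1 of the lattice. *)
Definition satisfying (n : nat) (I : instance n) (f : 'I_n -> bool) : bool :=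
  inst_l I ==> ceval (inst_C I) f.

(* f is eps-far: dist(f) = min over satisfying g of the weighted Hamming
   distance exceeds eps (min over the empty set = +infinity). *)
Definition far (eps : R) (n : nat) (I : instance n) (f : 'I_n -> bool) : Prop :=
  forall g : 'I_n -> bool, satisfying I g ->
    Rlt eps (wsum (inst_w I) (fun x => f x != g x)).

(* Deterministic adaptive query algorithms = decision trees. *)
Inductive dtree (n : nat) : Type :=
| Leaf : bool -> dtree n                         (* true = accept *)
| Query : 'I_n -> dtree n -> dtree n -> dtree n. (* query x; branch on f x = false / true *)

Fixpoint run (n : nat) (t : dtree n) (f : 'I_n -> bool) : bool :=
  match t with
  | Leaf b => b
  | Query x t0 t1 => if f x then run t1 f else run t0 f
  end.

Fixpoint nqueries (n : nat) (t : dtree n) (f : 'I_n -> bool) : nat :=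
  match t with
  | Leaf _ => 0
  | Query x t0 t1 => (if f x then nqueries t1 f else nqueries t0 f).+1
  end.

(* A randomized query algorithm: a finite probability distribution over
   decision trees, given as a list of (probability, tree). *)
Definition rtree (n : nat) : Type := list (R * dtree n).

Definition is_distribution (n : nat) (T : rtree n) : Prop :=
  (forall p, List.In p T -> Rle R0 (fst p)) /\
  List.fold_right (fun p acc => Rplus (fst p) acc) R0 T = R1.

Definition acc_prob (n : nat) (T : rtree n) (f : 'I_n -> bool) : R :=
  List.fold_right (fun p acc => Rplus (Rmult (fst p) (if run (snd p) f then R1 else R0)) acc) R0 T.

(* A tester for the problem restricted to threshold l = 1: given the instance
   (eps being fixed), it is a randomized query algorithm. *)
Definition tester : Type := forall n : nat, instance n -> rtree n.

Definition one_sided_tester (D eps : R) (T : tester) : Prop :=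
  forall (n : nat) (I : instance n),
    valid_instance D I -> inst_l I = true ->
    is_distribution (T n I) /\
    (forall f, satisfying I f -> acc_prob (T n I) f = R1) /\
    (forall f, far eps I f -> Rle (acc_prob (T n I) f) (Rdiv R1 (INR 3))).

(* Main.v *)
Require Import Defs.
From Stdlib Require Import Reals Lra Classical.
From mathcomp Require Import all_boot.
From mathcomp Require Import zify.
Set Implicit Arguments.
Unset Strict Implicit.
Delimit Scope R_scope with R.

Lemma count_allpairs (T1 T2 T3 : Type) (f : T1 -> T2 -> T3) (P : pred T3) s1 s2 :
  count P [seq f a b | a <- s1, b <- s2] = \sum_(a <- s1) count (fun b => P (f a b)) s2.
Proof.
elim: s1 => [|a s IH]; first by rewrite big_nil.
by rewrite allpairs_cons count_cat count_map IH big_cons.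
Qed.

Lemma count_and (T1 T2 T3 : Type) (f : T1 -> T2 -> T3) (P : pred T3) (P1 : pred T1) (P2 : pred T2) s1 s2 :
  (forall a b, P (f a b) = P1 a && P2 b) ->
  count P [seq f a b | a <- s1, b <- s2] = count P1 s1 * count P2 s2.
Proof.
move=> H; rewrite count_allpairs.
elim: s1 => [|a s IH]; first by rewrite big_nil.
rewrite big_cons IH /=; case E: (P1 a) => /=.
  have -> : count (fun b => P (f a b)) s2 = count P2 s2.
    by apply: eq_count => b; rewrite H E.
  by rewrite mulnDl mul1n.
have -> : count (fun b => P (f a b)) s2 = 0.
  by rewrite (eq_count (a2 := pred0)) ?count_pred0 // => b; rewrite H E.
by [].
Qed.

Lemma count_or (T1 T2 T3 : Type) (f : T1 -> T2 -> T3) (P : pred T3) (P1 : pred T1) (P2 : pred T2) s1 s2 :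
  (forall a b, P (f a b) -> P1 a || P2 b) ->
  count P [seq f a b | a <- s1, b <- s2] <= count P1 s1 * size s2 + size s1 * count P2 s2.
Proof.
move=> H; rewrite count_allpairs.
elim: s1 => [|a s IH]; first by rewrite big_nil.
rewrite big_cons /=.
have H1 : count (fun b => P (f a b)) s2 <= P1 a * size s2 + count P2 s2.
  case E: (P1 a); first by rewrite mul1n; apply: leq_trans (count_size _ _) (leq_addr _ _).
  rewrite mul0n add0n; apply: sub_count => b /= /H; rewrite E //.
rewrite /=.
have := leq_add H1 IH. nia.
Qed.

Lemma rec_bound (u N : nat -> nat) :
  (forall t, u t.+1 <= u t ^ 2 * N t ^ 2) -> (forall t, N t.+1 = N t ^ 4) ->
  forall t, u t * N 0 ^ (2 ^ t) <= u 0 ^ (2 ^ t) * N t.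
Proof.
move=> Hu HN; elim=> [|t IH]; first by rewrite expn0 !expn1.
rewrite HN (expnS 2 t) (mulnC 2 (2 ^ t)) !expnM.

set a := u t; set b := N 0 ^ 2 ^ t; set c := u 0 ^ 2 ^ t; set d := N t.
have H1 : u t.+1 * b ^ 2 <= a ^ 2 * d ^ 2 * b ^ 2 by rewrite leq_mul2r Hu orbT.
apply: leq_trans H1 _.
have H2 : (a * b) ^ 2 <= (c * d) ^ 2 by rewrite leq_exp2r.
have -> : a ^ 2 * d ^ 2 * b ^ 2 = (a * b) ^ 2 * d ^ 2.
  by rewrite !expnMn mulnAC.
have -> : c ^ 2 * d ^ 4 = (c * d) ^ 2 * d ^ 2.
  by rewrite expnMn -mulnA -expnD.
by rewrite leq_mul2r H2 orbT.
Qed.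

Fixpoint Lt (n t : nat) : seq (circuit n) :=
  match t with
  | 0 => map (@CVar n) (enum 'I_n)
  | t'.+1 => let A := [seq CAnd a b | a <- Lt n t', b <- Lt n t'] in
             [seq COr a b | a <- A, b <- A]
  end.

Lemma size_Lt n t : size (Lt n t) = n ^ (4 ^ t).
Proof.
elim: t => [|t IH] /=; first by rewrite size_map size_enum_ord expn0 expn1.
rewrite !size_allpairs IH -!expnD expnS.
congr (n ^ _); lia.
Qed.

Lemma all_allpairs (T1 T2 T3 : Type) (f : T1 -> T2 -> T3) (P : pred T3) (P1 : pred T1) (P2 : pred T2) s1 s2 :
  all P1 s1 -> all P2 s2 -> (forall a b, P1 a -> P2 b -> P (f a b)) ->
  all P [seq f a b | a <- s1, b <- s2].
Proof.
move=> h1 h2 H; elim: s1 h1 => [|a s IH] //= /andP [ha hs].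
rewrite all_cat IH // andbT.
elim: s2 h2 {IH} => [|b s2 IH2] //= /andP [hb hs2].
by rewrite H // IH2.
Qed.

Lemma depth_Lt n t : all (fun C => cdepth C == (2 * t)%N) (Lt n t).
Proof.
elim: t => [|t IH] /=.
  by rewrite all_map; elim: (enum 'I_n).
have HA : all (fun C => cdepth C == (2 * t).+1) [seq CAnd a b | a <- Lt n t, b <- Lt n t].
  by apply: (@all_allpairs _ _ _ _ _ _ _ _ _ IH IH) => a b /eqP ha /eqP hb /=; rewrite ha hb maxnn.
apply: (@all_allpairs _ _ _ _ _ _ _ _ _ HA HA) => a b /eqP ha /eqP hb /=; rewrite ha hb maxnn; apply/eqP; lia.
Qed.

Lemma In_all (T : Type) (p : pred T) s x : all p s -> List.In x s -> p x.
Proof.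
elim: s => [|a s IH] //= /andP [ha hs] [<- //|]; exact: IH.
Qed.

Lemma has_In (T : Type) (p : pred T) s : has p s -> exists x, List.In x s /\ p x.
Proof.
elim: s => [|a s IH] //= /orP [ha|hs]; first by exists a; split; [left|].
by case: (IH hs) => x [h1 h2]; exists x; split; [right|].
Qed.

Definition ones n (x : 'I_n -> bool) (s : seq (circuit n)) := count (fun C => ceval C x) s.
Definition zeros n (x : 'I_n -> bool) (s : seq (circuit n)) := count (fun C => ~~ ceval C x) s.

Lemma ones_step n x t :
  2 * ones x (Lt n t.+1) <= (2 * ones x (Lt n t)) ^ 2 * size (Lt n t) ^ 2.
Proof.
rewrite /ones /=.
set L := Lt n t.
set A := [seq CAnd a b | a <- L, b <- L].
have hA : count (fun C => ceval C x) A = count (fun C => ceval C x) L * count (fun C => ceval C x) L.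
  by apply: count_and.
have sA : size A = size L * size L by rewrite size_allpairs.
have := @count_or _ _ _ (@COr n) (fun C => ceval C x) (fun C => ceval C x) (fun C => ceval C x) A A (fun a b h => h).
rewrite hA sA. nia.
Qed.

Lemma zeros_step n x t :
  4 * zeros x (Lt n t.+1) <= (4 * zeros x (Lt n t)) ^ 2 * size (Lt n t) ^ 2.
Proof.
rewrite /zeros /=.
set L := Lt n t.
set A := [seq CAnd a b | a <- L, b <- L].
have hA := @count_or _ _ _ (@CAnd n) (fun C => ~~ ceval C x) (fun C => ~~ ceval C x) (fun C => ~~ ceval C x) L L.
have hA' : count (fun C => ~~ ceval C x) A <= count (fun C => ~~ ceval C x) L * size L + size L * count (fun C => ~~ ceval C x) L.
  by apply: hA => a b /=; case: (ceval a x); case: (ceval b x).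
have -> : count (fun C => ~~ ceval C x) [seq COr a b | a <- A, b <- A] =
   count (fun C => ~~ ceval C x) A * count (fun C => ~~ ceval C x) A.
  by apply: count_and => a b /=; rewrite negb_or.
set z := count _ A in hA' *.
set z0 := count _ L in hA' *.
have : z * z <= (z0 * size L + size L * z0) * (z0 * size L + size L * z0) by apply: leq_mul.
nia.
Qed.

Lemma ones0 n (x : 'I_n -> bool) : ones x (Lt n 0) = #|[pred i | x i]|.
Proof.
by rewrite /ones /= count_map cardE enumT /enum_mem size_filter; apply: eq_count.
Qed.

Lemma zeros0 n (x : 'I_n -> bool) : zeros x (Lt n 0) = #|[pred i | ~~ x i]|.
Proof.
by rewrite /zeros /= count_map cardE enumT /enum_mem size_filter; apply: eq_count.
Qed.

Lemma size_step n t : size (Lt n t.+1) = size (Lt n t) ^ 4.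
Proof. by rewrite !size_Lt expnS mulnC expnM. Qed.

Lemma two_le_pow t : 2 <= 2 ^ (2 ^ t).
Proof.
have h : 1 <= 2 ^ t by rewrite expn_gt0.
by rewrite -{1}(expn1 2) leq_pexp2l.
Qed.

Lemma low_bound n (x : 'I_n -> bool) t : 0 < n -> 8 * #|[pred i | x i]| <= n ->
  4 * 2 ^ (2 ^ t) * ones x (Lt n t) <= size (Lt n t).
Proof.
move=> n0 hx.
have R := @rec_bound (fun t => 2 * ones x (Lt n t)) (fun t => size (Lt n t))
  (fun t => ones_step x t) (fun t => size_step n t) t.
rewrite /= ones0 size_map size_enum_ord in R.
set u := 2 * ones x (Lt n t) in R *.
set N := size (Lt n t) in R *.
set k := #|_| in R hx.
have h1 : 4 ^ 2 ^ t * u * n ^ 2 ^ t <= n ^ 2 ^ t * N.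
  rewrite -mulnA; apply: (leq_trans (leq_mul (leqnn _) R)).
  rewrite mulnA -expnMn; apply: leq_mul => //.
  by rewrite leq_exp2r ?expn_gt0 //; lia.
have h2 : 4 ^ 2 ^ t * u <= N.
  have p : 0 < n ^ 2 ^ t by rewrite expn_gt0 n0.
  by rewrite -(leq_pmul2r p) (mulnC N).
apply: leq_trans h2.
have e : 4 ^ 2 ^ t = 2 ^ 2 ^ t * 2 ^ 2 ^ t by rewrite -expnMn.
rewrite e /u; move: (two_le_pow t); set a := 2 ^ 2 ^ t; nia.
Qed.

Lemma high_bound n (x : 'I_n -> bool) t : 0 < n -> 8 * #|[pred i | ~~ x i]| <= n ->
  4 * 2 ^ (2 ^ t) * zeros x (Lt n t) <= size (Lt n t).
Proof.
move=> n0 hx.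
have R := @rec_bound (fun t => 4 * zeros x (Lt n t)) (fun t => size (Lt n t))
  (fun t => zeros_step x t) (fun t => size_step n t) t.
rewrite /= zeros0 size_map size_enum_ord in R.
set u := 4 * zeros x (Lt n t) in R *.
set N := size (Lt n t) in R *.
set k := #|_| in R hx.
have h1 : 2 ^ 2 ^ t * u * n ^ 2 ^ t <= n ^ 2 ^ t * N.
  rewrite -mulnA; apply: (leq_trans (leq_mul (leqnn _) R)).
  rewrite mulnA -expnMn; apply: leq_mul => //.
  by rewrite leq_exp2r ?expn_gt0 //; lia.
have h2 : 2 ^ 2 ^ t * u <= N.
  have p : 0 < n ^ 2 ^ t by rewrite expn_gt0 n0.
  by rewrite -(leq_pmul2r p) (mulnC N).
apply: leq_trans h2.
by rewrite /u; lia.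
Qed.

Lemma count_exists (T : Type) (I : finType) (P : I -> pred T) s :
  count (fun a => [exists x, P x a]) s <= \sum_x count (P x) s.
Proof.
elim: s => [|a s IH] /=; first by rewrite big1.
rewrite big_split /= leq_add //.
case: (boolP [exists x, P x a]) => // /existsP [x0 hx0].
by rewrite (bigD1 x0) //= hx0.
Qed.

Definition bad n (C : circuit n) (x : 'I_n -> bool) : bool :=
  ((8 * #|[pred i | x i]| <= n) && ceval C x) ||
  ((8 * #|[pred i | ~~ x i]| <= n) && ~~ ceval C x).

Lemma bad_bound n (x : 'I_n -> bool) t : 0 < n ->
  2 * 2 ^ (2 ^ t) * count (fun C => bad C x) (Lt n t) <= size (Lt n t).
Proof.
move=> n0.
have h : count (fun C => bad C x) (Lt n t) <=
  (if 8 * #|[pred i | x i]| <= n then ones x (Lt n t) else 0) +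
  (if 8 * #|[pred i | ~~ x i]| <= n then zeros x (Lt n t) else 0).
  rewrite /ones /zeros.
  case: ifP => h1; case: ifP => h2; rewrite /bad h1 h2 /=.
  - rewrite -count_predUI; exact: leq_addr.
  - by rewrite addn0; apply: sub_count => C /=; rewrite orbF.
  - by rewrite add0n.
  - by rewrite count_pred0.
have hl := @low_bound n x t n0.
have hh := @high_bound n x t n0.
move: h; case: ifP => h1; case: ifP => h2 => h.
- have := hl h1; have := hh h2; nia.
- have := hl h1; nia.
- have := hh h2; nia.
- by move: h; rewrite leqn0 => /eqP ->; rewrite muln0.
Qed.

Lemma exists_good n t : 0 < n -> n <= 2 ^ t ->
  exists C, List.In C (Lt n t) /\ forall x : {ffun 'I_n -> bool}, ~~ bad C x.
Proof.
move=> n0 nt.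
set N := size (Lt n t).
have Npos : 0 < N by rewrite /N size_Lt expn_gt0 n0.
set S := \sum_(x : {ffun 'I_n -> bool}) count (fun C => bad C x) (Lt n t).
have hS : 2 * 2 ^ (2 ^ t) * S <= 2 ^ (2 ^ t) * N.
  rewrite /S big_distrr /=.
  apply: (@leq_trans (\sum_(x : {ffun 'I_n -> bool}) N)).
    by apply: leq_sum => x _; apply: bad_bound.
  rewrite sum_nat_const card_ffun card_bool card_ord leq_mul2r.
  by rewrite leq_exp2l // nt orbT.
have hS' : 2 * S <= N.
  by rewrite -(leq_pmul2l (expn_gt0 2 (2 ^ t))) mulnA (mulnC _ 2).
have h : count (fun C => [exists x : {ffun 'I_n -> bool}, bad C x]) (Lt n t) < N.
  have := count_exists (fun (x : {ffun 'I_n -> bool}) (C : circuit n) => bad C x) (Lt n t).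
  rewrite -/S => H; apply: leq_ltn_trans H _; lia.
have : has (predC (fun C => [exists x : {ffun 'I_n -> bool}, bad C x])) (Lt n t).
  rewrite has_count; move: h; rewrite /N -(count_predC (fun C => [exists x : {ffun 'I_n -> bool}, bad C x]) (Lt n t)).
  lia.
case/has_In => C [hC hb]; exists C; split => // x.
by apply/negP => hx; move: hb => /= /existsP; apply; exists x.
Qed.

Fixpoint qpath n (t : dtree n) (f : 'I_n -> bool) : seq 'I_n :=
  match t with
  | Leaf _ => [::]
  | Query x t0 t1 => x :: (if f x then qpath t1 f else qpath t0 f)
  end.

Lemma nq_size n (t : dtree n) f : nqueries t f = size (qpath t f).
Proof. by elim: t => //= x t0 IH0 t1 IH1; rewrite IH0 IH1; case: (f x). Qed.

Lemma run_agree n (t : dtree n) f g :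
  (forall x, x \in qpath t f -> g x = f x) -> run t g = run t f.
Proof.
elim: t => //= x t0 IH0 t1 IH1 H.
have hx : g x = f x by apply: H; rewrite mem_head.
rewrite hx; case: (f x) H => H.
  by apply: IH1 => y hy; apply: H; rewrite in_cons hy orbT.
by apply: IH0 => y hy; apply: H; rewrite in_cons hy orbT.
Qed.

Definition sumfst n (T : rtree n) := List.fold_right (fun p acc => Rplus (fst p) acc) R0 T.

Lemma acc_le n (T : rtree n) f : (forall p, List.In p T -> Rle R0 (fst p)) ->
  Rle (acc_prob T f) (sumfst T).
Proof.
elim: T => [|p T IH] /= H; first by apply: Rle_refl.
have h1 := H p (or_introl erefl).
have h2 := IH (fun q hq => H q (or_intror hq)).
case: (run (snd p) f); lra.
Qed.

Lemma acc_lt n (T : rtree n) f p : (forall p, List.In p T -> Rle R0 (fst p)) ->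
  List.In p T -> Rlt R0 (fst p) -> run (snd p) f = false ->
  Rlt (acc_prob T f) (sumfst T).
Proof.
elim: T => [|q T IH] H /=; first by case.
case=> [<-|hp] hp0 hr.
  have h2 := acc_le f (fun q hq => H q (or_intror hq)).
  rewrite hr; lra.
have h1 := H q (or_introl erefl).
have h2 := IH (fun q hq => H q (or_intror hq)) hp hp0 hr.
case: (run (snd q) f); lra.
Qed.

Lemma acc_eq n (T : rtree n) f : (forall p, List.In p T -> Rle R0 (fst p)) ->
  (forall p, List.In p T -> Rlt R0 (fst p) -> run (snd p) f = true) ->
  acc_prob T f = sumfst T.
Proof.
elim: T => [|p T IH] //= H H'.
rewrite IH; last 2 first.
- by move=> q hq; apply: H; right.
- by move=> q hq; apply: H'; right.
have h1 := H p (or_introl erefl).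
case: (Rle_lt_or_eq_dec _ _ h1) => h.
  by rewrite (H' p (or_introl erefl) h); lra.
rewrite -h; case: (run _ _); lra.
Qed.

Lemma iter_Rplus k c : iter k (Rplus c) R0 = Rmult (INR k) c.
Proof.
elim: k => [|k IH]; first by rewrite /=; lra.
rewrite (S_INR k) /= IH; lra.
Qed.

Lemma wsum_const n c (P : 'I_n -> bool) :
  wsum (fun _ => c) P = Rmult (INR #|[pred i | P i]|) c.
Proof.
rewrite /wsum big_const_seq iter_Rplus; congr (Rmult (INR _) c).
rewrite cardE /enum_mem size_filter /index_enum; unlock.
by apply: eq_count.
Qed.

Lemma ceval_ext n (C : circuit n) f g : (forall i, f i = g i) -> ceval C f = ceval C g.
Proof. by move=> H; elim: C => /= [x|C1 -> C2 ->|C1 -> C2 ->]. Qed.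

Lemma INR_expn2 e : INR (2 ^ e) = pow (INR 2) e.
Proof.
elim: e => [|e IH]; first by rewrite expn0 /=.
by rewrite expnS mult_INR IH /=.
Qed.

Lemma card_ffunE n (g : 'I_n -> bool) (h : bool -> bool) :
  #|[pred i | h ([ffun i => g i] i)]| = #|[pred i | h (g i)]|.
Proof. by apply: eq_card => i; rewrite !inE ffunE. Qed.

Theorem mainTheorem13 :
  exists D : R, Rlt R1 D /\
  exists eps : R, Rlt R0 eps /\
  exists c : R, Rlt R0 c /\
  exists N : nat,
    forall T : tester, one_sided_tester D eps T ->
    forall n : nat, (N <= n)%N ->
    exists I : instance n,
      valid_instance D I /\ inst_l I = true /\
      exists (f : 'I_n -> bool) (p : R * dtree n),
        List.In p (T n I) /\ Rlt R0 (fst p) /\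
        Rle (Rmult c (INR n)) (INR (nqueries (snd p) f)).
Proof.
exists 3%R; split; first lra.
exists (/8)%R; split; first lra.
exists (/8)%R; split; first lra.
exists 1%N.
move=> T HT n n0.
set e := trunc_log 2 n.
set t := e.+1.
have nt : n <= 2 ^ t := ltnW (trunc_log_ltn n (isT : 1 < 2)).
have en : 2 ^ e <= n := trunc_logP (isT : 1 < 2) n0.
case: (exists_good n0 nt) => C [hCin HC].
set I := Instance C true (fun _ : 'I_n => Rinv (INR n)).
have Rn : (1 <= INR n)%R by apply: (le_INR 1 n); apply/leP.
have I2 : INR 2 = 2%R by rewrite /=; lra.
have ln2 : (0 < ln (INR 2))%R by rewrite I2; have := ln_lt_2; lra.
have valid : valid_instance 3 I.
  split; [|split].
  - rewrite /= (eqP (In_all (depth_Lt n t) hCin)) mult_INR (S_INR e).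
    have he : (INR e * ln (INR 2) <= ln (INR n))%R.
      rewrite -ln_pow; last lra.
      rewrite -INR_expn2.
      have h1 : (INR (2 ^ e) <= INR n)%R by apply: le_INR; apply/leP.
      have h0 : (0 < INR (2 ^ e))%R by apply: lt_0_INR; apply/ltP; rewrite expn_gt0.
      case: (Rle_lt_or_eq_dec _ _ h1) => h.
        by apply: Rlt_le; apply: ln_increasing.
      by rewrite h; apply: Rle_refl.
    have hl : (INR e <= log2 (INR n))%R.
      rewrite /log2; apply: (Rmult_le_reg_r (ln (INR 2))) => //.
      by rewrite /Rdiv Rmult_assoc Rinv_l ?Rmult_1_r; lra.
    have e0 : (0 <= INR e)%R by apply: pos_INR.
    rewrite I2; lra.
  - move=> x /=; split.
      by apply: Rlt_le; apply: Rinv_0_lt_compat; lra.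
    have : (/ INR n <= / 1)%R by apply: Rinv_le_contravar; lra.
    rewrite Rinv_1; lra.
  - rewrite /= wsum_const.
    have -> : #|[pred i : 'I_n | true]| = n.
      by rewrite (@eq_card _ _ predT) ?card_ord.
    by apply: Rinv_r; lra.
have [Hdist [Hsat Hfar]] := HT n I valid erefl.
have key_sat : forall g : 'I_n -> bool, 8 * #|[pred i | ~~ g i]| <= n -> ceval C g.
  move=> g hg; have := HC [ffun i => g i]; rewrite /bad.
  rewrite (card_ffunE g negb) (card_ffunE g id) hg /=.
  rewrite (@ceval_ext _ C [ffun i => g i] g) ?orbF; last by move=> i; rewrite ffunE.
  by case: (ceval C g); rewrite ?andbF.
have key_far : forall g : 'I_n -> bool, ceval C g -> n < 8 * #|[pred i | g i]|.
  move=> g hg; have := HC [ffun i => g i]; rewrite /bad.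
  rewrite (card_ffunE g negb) (card_ffunE g id).
  rewrite (@ceval_ext _ C [ffun i => g i] g) ?hg /=; last by move=> i; rewrite ffunE.
  by rewrite andbT andbF orbF; case: leqP.
set f0 := fun _ : 'I_n => false.
have far0 : far (/8) I f0.
  move=> g; rewrite /satisfying /= => hg.
  have hk := key_far g hg.
  rewrite wsum_const.
  have -> : #|[pred i | f0 i != g i]| = #|[pred i | g i]|.
    by apply: eq_card => i; rewrite !inE /f0; case: (g i).
  set k := #|_| in hk *.
  have hk' : (INR n < 8 * INR k)%R.
    have hk2 : (n < 8 * k)%coq_nat by apply/ltP.
    have := lt_INR _ _ hk2; rewrite mult_INR.
    have -> : INR 8 = 8%R by rewrite /=; lra.
    done.
  have hr : (0 < / INR n)%R by apply: Rinv_0_lt_compat; lra.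
  have hnr : (INR n * / INR n = 1)%R by apply: Rinv_r; lra.
  nra.
have hdist0 : forall p, List.In p (T n I) -> (0 <= fst p)%R by case: Hdist.
have hsum : sumfst (T n I) = 1%R by case: Hdist.
exists I; split => //; split => //.
case: (classic (exists p, List.In p (T n I) /\ (0 < fst p)%R /\ run (snd p) f0 = false)).
- case=> p [hp [hp0 hr]].
  case: (classic (Rle (Rmult (/8) (INR n)) (INR (nqueries (snd p) f0)))) => hq.
    by exists f0, p.
  exfalso.
  have hq' : 8 * nqueries (snd p) f0 < n.
    apply/ltP; apply: INR_lt; rewrite mult_INR.
    have -> : INR 8 = 8%R by rewrite /=; lra.
    lra.
  set g := fun i : 'I_n => i \notin qpath (snd p) f0.
  have hrun : run (snd p) g = false.
    rewrite (@run_agree n (snd p) f0 g) // => x hx.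
    by rewrite /g hx.
  have hc : 8 * #|[pred i | ~~ g i]| <= n.
    have : #|[pred i | ~~ g i]| <= nqueries (snd p) f0.
      rewrite nq_size; apply: leq_trans (card_size (qpath (snd p) f0)).
      by apply: subset_leq_card; apply/subsetP => i; rewrite !inE negbK.
    lia.
  have hs : satisfying I g by rewrite /satisfying /=; apply: key_sat.
  have := Hsat g hs.
  have := acc_lt hdist0 hp hp0 hrun.
  rewrite hsum; lra.
- move=> hno; exfalso.
  have := Hfar f0 far0.
  rewrite (@acc_eq n (T n I) f0 hdist0); last first.
    move=> p hp hp0; case E: (run (snd p) f0) => //.
    by exfalso; apply: hno; exists p.
  rewrite hsum.
  have -> : INR 3 = 3%R by rewrite /=; lra.
  lra.
Qed.
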